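(* Let $\mathcal E_i\equiv 1\to H_i\xrightarrow{\alpha_i}G_i\xrightarrow{\beta_i}K_i\to1$ ($i=1,2$) be central extensions of multiplicative Lie algebras and $(\lambda,\mu,\nu)$ a morphism from $\mathcal E_1$ to $\mathcal E_2$. Then $(\lambda,\mu,\nu)$ is an isoclinic morphism if and only if $\nu$ is a multiplicative Lie algebra isomorphism and $\ker\mu\cap{}^M[G_1,G_1]=1$.
   Context: A multiplicative Lie algebra is a group $(G,\cdot)$ with a binary operation $\star$ such that for all $x,y,z\in G$: $x\star x=1$; $x\star(yz)=(x\star y)\,{}^y(x\star z)$; $(xy)\star z={}^x(y\star z)(x\star z)$; $((x\star y)\star{}^yz)((y\star z)\star{}^zx)((z\star x)\star{}^xy)=1$; ${}^z(x\star y)={}^zx\star{}^zy$, where ${}^xy=xyx^{-1}$. Homomorphisms preserve both operations. $Z(G)$ is the group center, $LZ(G)=\{x: x\star y=1\ \forall y\}$, $\mathcal Z(G)=LZ(G)\cap Z(G)$; $[x,y]$ is the group commutator; ${}^M[G,G]=(G\star G)[G,G]$ where $G\star G$ is the ideal generated by all $a\star b$. A central extension is a short exact sequence $1\to H\xrightarrow{\alpha}G\xrightarrow{\beta}K\to1$ of multiplicative Lie algebras with $\alpha(H)\subseteq\mathcal Z(G)$. A morphism $(\lambda,\mu,\nu)$ from $\mathcal E_1$ to $\mathcal E_2$ consists of homomorphisms $\lambda:H_1\to H_2$, $\mu:G_1\to G_2$, $\nu:K_1\to K_2$ with $\mu\alpha_1=\alpha_2\lambda$ and $\beta_2\mu=\nu\beta_1$.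 An isoclinism between $\mathcal E_1,\mathcal E_2$ is a pair of isomorphisms $\lambda':K_1\to K_2$, $\mu':{}^M[G_1,G_1]\to{}^M[G_2,G_2]$ such that $\mu'([g,g'])=[h,h']$ and $\mu'(g\star g')=h\star h'$ whenever $g,g'\in G_1$, $h,h'\in G_2$ satisfy $\beta_2(h)=\lambda'\beta_1(g)$, $\beta_2(h')=\lambda'\beta_1(g')$. A morphism $(\lambda,\mu,\nu)$ is an isoclinic morphism if $(\nu,\mu|_{{}^M[G_1,G_1]})$ is an isoclinism between $\mathcal E_1$ and $\mathcal E_2$. *)

(* Defs.v *)
From Stdlib Require Import Utf8.

Set Implicit Arguments.
Unset Strict Implicit.

Record MLA : Type := {
  car :> Type;
  mul : car -> car -> car;
  one : car;
  inv : car -> car;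
  star : car -> car -> car;
  mulA : forall x y z, mul x (mul y z) = mul (mul x y) z;
  mul1x : forall x, mul one x = x;
  mulx1 : forall x, mul x one = x;
  mulVx : forall x, mul (inv x) x = one;
  mulxV : forall x, mul x (inv x) = one;
  star_xx : forall x, star x x = one;
  star_mulr : forall x y z,
    star x (mul y z) = mul (star x y) (mul (mul y (star x z)) (inv y));
  star_mull : forall x y z,
    star (mul x y) z = mul (mul (mul x (star y z)) (inv x)) (star x z);
  star_jacobi : forall x y z,
    let cj := fun a b => mul (mul a b) (inv a) in
    mul (mul (star (star x y) (cj y z)) (star (star y z) (cj z x)))
        (star (star z x) (cj x y)) = one;
  star_conj : forall x y z,
    let cj := fun a b => mul (mul a b) (inv a) in
    cj z (star x y) = star (cj z x) (cj z y)
}.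

Arguments mul {m}. Arguments one {m}. Arguments inv {m}. Arguments star {m}.

Section Basic.
Variable G : MLA.

Definition conjl (x y : G) : G := mul (mul x y) (inv x).
Definition gcomm (x y : G) : G := mul (mul (mul x y) (inv x)) (inv y).

Definition is_subgroup (S : G -> Prop) : Prop :=
  S one /\ (forall x y, S x -> S y -> S (mul x y)) /\ (forall x, S x -> S (inv x)).

Definition is_ideal (I : G -> Prop) : Prop :=
  is_subgroup I /\ (forall g x, I x -> I (conjl g x)) /\
  (forall g x, I x -> I (star g x)) /\ (forall g x, I x -> I (star x g)).

Definition starGG (x : G) : Prop :=
  forall I, is_ideal I -> (forall a b, I (star a b)) -> I x.

Definition commGG (x : G) : Prop :=
  forall S, is_subgroup S -> (forall a b, S (gcomm a b)) -> S x.

Definition McommGG (x : G) : Prop :=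
  exists a b, starGG a /\ commGG b /\ x = mul a b.

Definition center (x : G) : Prop := forall y, mul x y = mul y x.
Definition Lcenter (x : G) : Prop := forall y, star x y = one.
Definition Zcenter (x : G) : Prop := Lcenter x /\ center x.

End Basic.

Definition mla_hom (G1 G2 : MLA) (f : G1 -> G2) : Prop :=
  (forall x y, f (mul x y) = mul (f x) (f y)) /\
  (forall x y, f (star x y) = star (f x) (f y)).

Definition mla_iso (G1 G2 : MLA) (f : G1 -> G2) : Prop :=
  mla_hom f /\ (forall x y, f x = f y -> x = y) /\ (forall z, exists x, f x = z).

Definition central_extension (H G K : MLA) (alpha : H -> G) (beta : G -> K) : Prop :=
  mla_hom alpha /\ mla_hom beta /\
  (forall x y, alpha x = alpha y -> x = y) /\
  (forall k, exists g, beta g = k) /\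
  (forall g, beta g = one <-> exists h, alpha h = g) /\
  (forall h, Zcenter (alpha h)).

Definition ext_morphism (H1 G1 K1 H2 G2 K2 : MLA)
  (alpha1 : H1 -> G1) (beta1 : G1 -> K1) (alpha2 : H2 -> G2) (beta2 : G2 -> K2)
  (lam : H1 -> H2) (mu : G1 -> G2) (nu : K1 -> K2) : Prop :=
  mla_hom lam /\ mla_hom mu /\ mla_hom nu /\
  (forall h, mu (alpha1 h) = alpha2 (lam h)) /\
  (forall g, beta2 (mu g) = nu (beta1 g)).

(** Isoclinism (λ', μ') between E1 and E2.  The map μ' : ^M[G1,G1] -> ^M[G2,G2]
    is represented by a function [mu' : G1 -> G2] of which only its restriction
    to ^M[G1,G1] matters. *)
Definition isoclinism (G1 K1 G2 K2 : MLA)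
  (beta1 : G1 -> K1) (beta2 : G2 -> K2) (lam' : K1 -> K2) (mu' : G1 -> G2) : Prop :=
  mla_iso lam' /\
  (forall x, McommGG x -> McommGG (mu' x)) /\
  (forall x y, McommGG x -> McommGG y -> mu' (mul x y) = mul (mu' x) (mu' y)) /\
  (forall x y, McommGG x -> McommGG y -> mu' (star x y) = star (mu' x) (mu' y)) /\
  (forall x y, McommGG x -> McommGG y -> mu' x = mu' y -> x = y) /\
  (forall z, McommGG z -> exists x, McommGG x /\ mu' x = z) /\
  (forall (g g' : G1) (h h' : G2),
     beta2 h = lam' (beta1 g) -> beta2 h' = lam' (beta1 g') ->
     mu' (gcomm g g') = gcomm h h' /\ mu' (star g g') = star h h').

Definition isoclinic_morphism (H1 G1 K1 H2 G2 K2 : MLA)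
  (alpha1 : H1 -> G1) (beta1 : G1 -> K1) (alpha2 : H2 -> G2) (beta2 : G2 -> K2)
  (lam : H1 -> H2) (mu : G1 -> G2) (nu : K1 -> K2) : Prop :=
  ext_morphism alpha1 beta1 alpha2 beta2 lam mu nu /\
  isoclinism beta1 beta2 nu mu.

(* Main.v *)
Require Import Defs.

Section L.
Variable G : MLA.
Implicit Types x y z a b c d : G.

Lemma mulA' x y z : mul (mul x y) z = mul x (mul y z).
Proof. symmetry; apply mulA. Qed.
Lemma mulKV x y : mul (inv x) (mul x y) = y.
Proof. rewrite mulA, mulVx; apply mul1x. Qed.
Lemma mulVK x y : mul x (mul (inv x) y) = y.
Proof. rewrite mulA, mulxV; apply mul1x. Qed.
Lemma mul_canc x y z : mul x y = mul x z -> y = z.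
Proof. intro E. rewrite <- (mulKV x y), E. apply mulKV. Qed.
Lemma inv_uniq x y : mul x y = one -> inv x = y.
Proof. intro E. rewrite <- (mulKV x y), E. symmetry; apply mulx1. Qed.
Lemma eq_of_div x y : mul x (inv y) = one -> x = y.
Proof. intro E. rewrite <- (mulx1 x), <- (mulVx y), mulA, E. apply mul1x. Qed.
Lemma inv_mul x y : inv (mul x y) = mul (inv y) (inv x).
Proof. apply inv_uniq. rewrite mulA', mulVK. apply mulxV. Qed.
Lemma inv_one : inv (one : G) = one.
Proof. apply inv_uniq. apply mul1x. Qed.
Lemma inv_inv x : inv (inv x) = x.
Proof. apply inv_uniq. apply mulVx. Qed.

Lemma star_anti x y : mul (star y x) (star x y) = one.
Proof.
  pose proof (star_xx (mul x y)) as E.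
  rewrite star_mull in E.
  rewrite (star_mulr y x y), star_xx, mulx1, mulxV, mulx1 in E.
  rewrite (star_mulr x x y), star_xx, mul1x in E.
  rewrite !mulA' in E.
  rewrite mulKV in E.
  rewrite <- (mulxV x) in E.
  apply mul_canc in E.
  rewrite <- (mulx1 (star x y)), <- (mulVx x), (mulA (star x y)), (mulA (star y x)), E.
  reflexivity.
Qed.

Lemma star_c_r a c : Zcenter c -> star a c = one.
Proof.
  intros [Hl _]. pose proof (star_anti a c) as E. rewrite (Hl a), mul1x in E. exact E.
Qed.

Lemma star_mulc_l a c z : Zcenter c -> star (mul a c) z = star a z.
Proof.
  intros [Hl Hc]. rewrite star_mull, Hl, mulx1, mulxV. apply mul1x.
Qed.
Lemma star_mulc_r a b d : Zcenter d -> star a (mul b d) = star a b.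
Proof.
  intros Hd. rewrite star_mulr, (star_c_r a d Hd), mulx1, mulxV. apply mulx1.
Qed.
Lemma conjl_mulc a c x : Zcenter c -> conjl (mul a c) x = conjl a x.
Proof.
  intros [_ Hc]. unfold conjl. rewrite inv_mul, !mulA'. f_equal.
  rewrite (mulA c x), (Hc x), mulA', mulVK. reflexivity.
Qed.
Lemma gcomm_mulc_l a c b : Zcenter c -> gcomm (mul a c) b = gcomm a b.
Proof.
  intros [_ Hc]. unfold gcomm. rewrite inv_mul, !mulA'. f_equal.
  rewrite (mulA c b), (Hc b), mulA', mulVK. reflexivity.
Qed.
Lemma gcomm_mulc_r a b d : Zcenter d -> gcomm a (mul b d) = gcomm a b.
Proof.
  intros [_ Hc]. unfold gcomm. rewrite inv_mul, !mulA'. f_equal. f_equal.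
  rewrite (mulA d (inv a)), (Hc (inv a)), mulA', mulVK. reflexivity.
Qed.

Lemma starGG_star a b : starGG (star a b).
Proof. intros I _ H. apply H. Qed.
Lemma commGG_gcomm a b : commGG (gcomm a b).
Proof. intros S _ H. apply H. Qed.
Lemma starGG_one : starGG (one : G).
Proof. intros I [[H _] _] _. exact H. Qed.
Lemma commGG_one : commGG (one : G).
Proof. intros I [H _] _. exact H. Qed.
Lemma starGG_mul x y : starGG x -> starGG y -> starGG (mul x y).
Proof. intros Hx Hy I HI Hs. pose proof (Hx I HI Hs); pose proof (Hy I HI Hs). destruct HI as [[_ [HH _]] _]. apply HH; auto. Qed.
Lemma starGG_inv x : starGG x -> starGG (inv x).
Proof. intros Hx I HI Hs. pose proof (Hx I HI Hs). destruct HI as [[_ [_ HH]] _]. apply HH; auto. Qed.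
Lemma starGG_conjl g x : starGG x -> starGG (conjl g x).
Proof. intros Hx I HI Hs. pose proof (Hx I HI Hs). destruct HI as [_ [HH _]]. apply HH; auto. Qed.
Lemma commGG_mul x y : commGG x -> commGG y -> commGG (mul x y).
Proof. intros Hx Hy I HI Hs. pose proof (Hx I HI Hs); pose proof (Hy I HI Hs). destruct HI as [_ [HH _]]. apply HH; auto. Qed.
Lemma commGG_inv x : commGG x -> commGG (inv x).
Proof. intros Hx I HI Hs. pose proof (Hx I HI Hs). destruct HI as [_ [_ HH]]. apply HH; auto. Qed.

Lemma Mcomm_one : McommGG (one : G).
Proof. exists one, one. split; [apply starGG_one|split; [apply commGG_one|]]. symmetry; apply mul1x. Qed.
Lemma Mcomm_mul x y : McommGG x -> McommGG y -> McommGG (mul x y).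
Proof.
  intros [a [b [Ha [Hb ->]]]] [a' [b' [Ha' [Hb' ->]]]].
  exists (mul a (conjl b a')), (mul b b'). split; [|split].
  - apply starGG_mul; auto. apply starGG_conjl; auto.
  - apply commGG_mul; auto.
  - unfold conjl. rewrite !mulA', mulKV. reflexivity.
Qed.
Lemma Mcomm_inv x : McommGG x -> McommGG (inv x).
Proof.
  intros [a [b [Ha [Hb ->]]]].
  exists (conjl (inv b) (inv a)), (inv b). split; [|split].
  - apply starGG_conjl, starGG_inv; auto.
  - apply commGG_inv; auto.
  - unfold conjl. rewrite inv_mul, !mulA', mulVx, mulx1. reflexivity.
Qed.
End L.

Section H.
Variables G1 G2 : MLA.
Variable f : G1 -> G2.
Hypothesis Hf : mla_hom f.

Lemma hom_one : f one = one.
Proof.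
  destruct Hf as [Hm _]. apply (mul_canc _ (f one)).
  rewrite <- Hm, !mulx1. reflexivity.
Qed.
Lemma hom_inv x : f (inv x) = inv (f x).
Proof.
  destruct Hf as [Hm _]. symmetry. apply inv_uniq. rewrite <- Hm, mulxV. apply hom_one.
Qed.
Lemma hom_conjl x y : f (conjl x y) = conjl (f x) (f y).
Proof. destruct Hf as [Hm _]. unfold conjl. rewrite !Hm, hom_inv. reflexivity. Qed.
Lemma hom_gcomm x y : f (gcomm x y) = gcomm (f x) (f y).
Proof. destruct Hf as [Hm _]. unfold gcomm. rewrite !Hm, !hom_inv. reflexivity. Qed.

Lemma hom_starGG x : starGG x -> starGG (f x).
Proof.
  destruct Hf as [Hm Hs].
  intros Hx I [[H1 [HM HV]] [HC [HS1 HS2]]] Hst.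
  apply (Hx (fun y => I (f y))).
  - repeat split.
    + rewrite hom_one; auto.
    + intros a b; rewrite Hm; auto.
    + intros a; rewrite hom_inv; auto.
    + intros g a; rewrite hom_conjl; auto.
    + intros g a; rewrite Hs; auto.
    + intros g a; rewrite Hs; auto.
  - intros a b; rewrite Hs; auto.
Qed.
Lemma hom_commGG x : commGG x -> commGG (f x).
Proof.
  destruct Hf as [Hm Hs].
  intros Hx I [H1 [HM HV]] Hst.
  apply (Hx (fun y => I (f y))).
  - repeat split.
    + rewrite hom_one; auto.
    + intros a b; rewrite Hm; auto.
    + intros a; rewrite hom_inv; auto.
  - intros a b; rewrite hom_gcomm; auto.
Qed.
Lemma hom_Mcomm x : McommGG x -> McommGG (f x).
Proof.
  destruct Hf as [Hm Hs].
  intros [a [b [Ha [Hb ->]]]]. exists (f a), (f b).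
  split; [apply hom_starGG; auto|split; [apply hom_commGG; auto|apply Hm]].
Qed.
End H.
Arguments hom_one {G1 G2 f}. Arguments hom_inv {G1 G2 f}. Arguments hom_conjl {G1 G2 f}. Arguments hom_gcomm {G1 G2 f}. Arguments hom_Mcomm {G1 G2 f}.

Theorem theorem4p5 (H1 G1 K1 H2 G2 K2 : MLA)
  (alpha1 : H1 -> G1) (beta1 : G1 -> K1) (alpha2 : H2 -> G2) (beta2 : G2 -> K2)
  (lam : H1 -> H2) (mu : G1 -> G2) (nu : K1 -> K2) :
  central_extension alpha1 beta1 ->
  central_extension alpha2 beta2 ->
  ext_morphism alpha1 beta1 alpha2 beta2 lam mu nu ->
  (isoclinic_morphism alpha1 beta1 alpha2 beta2 lam mu nu <->
   (mla_iso nu /\ (forall x : G1, McommGG x -> mu x = one -> x = one))).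
Proof.
  intros CE1 CE2 EM.
  destruct EM as [Hlam [Hmu [Hnu [Hma Hmb]]]].
  destruct CE2 as [Ha2 [Hb2 [Ia2 [Sb2 [Kb2 Za2]]]]].
  destruct CE1 as [_ [_ [_ [Sb1 _]]]].
  assert (Lift : forall a b : G2, beta2 a = beta2 b ->
             exists c, Zcenter c /\ b = mul a c).
  { intros a b E. assert (E' : beta2 (mul (inv a) b) = one).
    { destruct Hb2 as [Hm Hs]. rewrite Hm, (hom_inv (conj Hm Hs)), E. apply mulVx. }
    apply Kb2 in E'. destruct E' as [h Eh]. exists (alpha2 h). split; auto.
    rewrite Eh. symmetry; apply mulVK. }
  split.
  - intros [_ [Hiso [_ [_ [_ [Hinj _]]]]]]. split; auto.
    intros x Hx E. apply Hinj; auto. apply Mcomm_one. rewrite E. symmetry.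
    apply (hom_one Hmu).
  - intros [Hiso Hker].
    assert (Lift2 : forall g2 : G2, exists g1 c, Zcenter c /\ g2 = mul (mu g1) c).
    { intro g2. destruct Hiso as [_ [_ Hsurj]]. destruct (Hsurj (beta2 g2)) as [k Ek].
      destruct (Sb1 k) as [g1 Eg1]. exists g1.
      apply Lift. rewrite Hmb, Eg1. auto. }
    split; [exact (conj Hlam (conj Hmu (conj Hnu (conj Hma Hmb))))|].
    destruct Hmu as [Hmm Hms].
    split; [exact Hiso|].
    split; [intros; apply (hom_Mcomm (conj Hmm Hms)); auto|].
    split; [intros; apply Hmm|].
    split; [intros; apply Hms|].
    split.
    { intros x y Hx Hy E. apply eq_of_div. apply Hker.
      - apply Mcomm_mul; auto. apply Mcomm_inv; auto.
      - rewrite Hmm, (hom_inv (conj Hmm Hms)), E. apply mulxV. }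
    split.
    { intros z [a [b [Ha [Hb ->]]]].
      assert (SA : forall z, starGG z -> exists x, starGG x /\ mu x = z).
      { intros z0 Hz0. apply (Hz0 (fun z => exists x, starGG x /\ mu x = z)).
        - repeat split.
          + exists one. split; [apply starGG_one|apply (hom_one (conj Hmm Hms))].
          + intros u v [x [Hx <-]] [y [Hy <-]]. exists (mul x y).
            split; [apply starGG_mul; auto|apply Hmm].
          + intros u [x [Hx <-]]. exists (inv x).
            split; [apply starGG_inv; auto|apply (hom_inv (conj Hmm Hms))].
          + intros g u [x [Hx <-]]. destruct (Lift2 g) as [g1 [c [Hc ->]]].
            exists (conjl g1 x). split; [apply starGG_conjl; auto|].
            rewrite conjl_mulc; auto. apply (hom_conjl (conj Hmm Hms)).
          + intros g u [x [Hx <-]]. destruct (Lift2 g) as [g1 [c [Hc ->]]].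
            exists (star g1 x). split.
            * intros I HI Hs. pose proof (Hx I HI Hs) as Hx'. destruct HI as [_ [_ [H3 H4]]]. apply H3, Hx'.
            * rewrite star_mulc_l; auto.
          + intros g u [x [Hx <-]]. destruct (Lift2 g) as [g1 [c [Hc ->]]].
            exists (star x g1). split.
            * intros I HI Hs. pose proof (Hx I HI Hs) as Hx'. destruct HI as [_ [_ [H3 H4]]]. apply H4, Hx'.
            * rewrite star_mulc_r; auto.
        - intros u v. destruct (Lift2 u) as [u1 [c [Hc ->]]].
          destruct (Lift2 v) as [v1 [d [Hd ->]]].
          exists (star u1 v1). split; [apply starGG_star|].
          rewrite star_mulc_l, star_mulc_r; auto. }
      assert (SB : forall z, commGG z -> exists x, commGG x /\ mu x = z).
      { intros z0 Hz0. apply (Hz0 (fun z => exists x, commGG x /\ mu x = z)).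
        - repeat split.
          + exists one. split; [apply commGG_one|apply (hom_one (conj Hmm Hms))].
          + intros u v [x [Hx <-]] [y [Hy <-]]. exists (mul x y).
            split; [apply commGG_mul; auto|apply Hmm].
          + intros u [x [Hx <-]]. exists (inv x).
            split; [apply commGG_inv; auto|apply (hom_inv (conj Hmm Hms))].
        - intros u v. destruct (Lift2 u) as [u1 [c [Hc ->]]].
          destruct (Lift2 v) as [v1 [d [Hd ->]]].
          exists (gcomm u1 v1). split; [apply commGG_gcomm|].
          rewrite gcomm_mulc_l, gcomm_mulc_r; auto. apply (hom_gcomm (conj Hmm Hms)). }
      destruct (SA a Ha) as [x [Hx <-]]. destruct (SB b Hb) as [y [Hy <-]].
      exists (mul x y). split; [|apply Hmm]. exists x, y. auto. }
    intros g g' h h' E E'.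
    rewrite <- Hmb in E, E'. symmetry in E, E'.
    destruct (Lift _ _ E) as [c [Hc ->]]. destruct (Lift _ _ E') as [d [Hd ->]].
    rewrite gcomm_mulc_l, gcomm_mulc_r, star_mulc_l, star_mulc_r; auto.
    split; [apply (hom_gcomm (conj Hmm Hms))|apply Hms].
Qed.
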